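(* Let $k\in\mathbb{N}_0$, $n=2k+1$, $a<b$, $v\in\mathbb{R}$ constant, and $T>0$. For integers $N\ge1$ let $h=(b-a)/N$ and grid points $x_j=a+jh$. Consider the periodic advection equation $\phi_t+v\phi_x=0$ on $[a,b]$ with periodic boundary conditions and $(b-a)$-periodic initial condition $\phi_{IC}\in C^{k+1}$ (extended periodically). Define the jet scheme $\phi_0=\phi_{IC}$, $\phi_{m+1}=P_k^+(A\phi_m)$, where $(A\phi)(x)=\phi(x-v\Delta t)$ (periodic shift) and $P_k^+$ is the periodic piecewise degree-$n$ Hermite interpolation on the grid $\{x_j\}$ using derivatives up to order $k$ at grid points. Assume the time step satisfies $\Delta t\ge c\,h^{k+1}$ for a constant $c>0$ independent of $h$. Then there is a constant $M$, depending on $k,a,b,v,T,c,\phi_{IC}$ but not on $h$ (or $N$) or $m$, such that for all $m$ with $0\le m\Delta t\le T$: $$\|\phi_m^{(\ell)}\|_{L^\infty(a,b)}\le M\ \ (0\le\ell\le k),\qquad \|\phi_m^{(k+1)}\|_{L^2(a,b)}\le M.$$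
   Context: $f^{(\ell)}$ denotes the $\ell$-th derivative; for the piecewise polynomial $\phi_m$ (which is $C^k$ and periodic), $\phi_m^{(k+1)}$ is defined cellwise. The periodic Hermite interpolation $P_k^+g$ of a $(b-a)$-periodic $C^k$ function $g$ is the function which on each cell $[x_j,x_{j+1}]$ equals the polynomial of degree $\le n$ matching $g^{(\ell)}(x_j)$ and $g^{(\ell)}(x_{j+1})$ for $\ell=0,\dots,k$. *)

(* Defs.v *)
From Stdlib Require Import Reals Lra Lia.
Open Scope R_scope.

Definition is_poly_le (n : nat) (f : R -> R) : Prop :=
  exists c : nat -> R, forall x, f x = sum_f_R0 (fun i => c i * x ^ i) n.

Definition deriv_tower (K : nat) (D : nat -> R -> R) : Prop :=
  forall l x, (l <= K)%nat -> derivable_pt_lim (D l) x (D (S l) x).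

Definition mesh (a b : R) (N : nat) : R := (b - a) / INR N.
Definition grid (a b : R) (N : nat) (j : nat) : R := a + INR j * mesh a b N.

(* Phi_old l, Phi_new l stand for the l-th derivative of phi_m, phi_{m+1}
   (l <= k; l = k+1 is the cellwise derivative).
   phi_{m+1} = P_k^+ (A phi_m) with (A phi)(x) = phi(x - v dt):
   on each cell [x_j, x_{j+1}] phi_{m+1} is the polynomial of degree
   <= 2k+1 whose derivatives of order <= k at x_j, x_{j+1} match those of
   A phi_m, and phi_{m+1} is extended (b-a)-periodically. *)
Definition jet_step (k : nat) (a b v dt : R) (N : nat)
    (Phi_old Phi_new : nat -> R -> R) : Prop :=
  (forall l x, (l <= S k)%nat -> Phi_new l (x + (b - a)) = Phi_new l x) /\
  (forall j, (j < N)%nat ->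
     exists P : nat -> R -> R,
       is_poly_le (2 * k + 1) (P 0%nat) /\
       deriv_tower (S k) P /\
       (forall l x, (l <= k)%nat ->
          grid a b N j <= x <= grid a b N (S j) -> Phi_new l x = P l x) /\
       (forall x, grid a b N j < x < grid a b N (S j) ->
          Phi_new (S k) x = P (S k) x) /\
       (forall l, (l <= k)%nat ->
          P l (grid a b N j) = Phi_old l (grid a b N j - v * dt) /\
          P l (grid a b N (S j)) = Phi_old l (grid a b N (S j) - v * dt))).

(* Main.v *)
Require Import Defs.
From Stdlib Require Import Reals Lra Lia ZArith ClassicalEpsilon List RList FunctionalExtensionality Factorial.
Open Scope R_scope.

Definition RI (f : R -> R) (a b : R) : Prop := exists _ : Riemann_integrable f a b, True.
Definition Int (f : R -> R) (a b : R) : R :=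
  epsilon (inhabits 0) (fun r => exists pr : Riemann_integrable f a b, RiemannInt pr = r).

Lemma Int_eq f a b (pr : Riemann_integrable f a b) : Int f a b = RiemannInt pr.
Proof.
  unfold Int.
  destruct (epsilon_spec (inhabits 0) (fun r => exists pr : Riemann_integrable f a b, RiemannInt pr = r)) as [pr' H].
  - exists (RiemannInt pr), pr; reflexivity.
  - rewrite <- H; apply RiemannInt_P5.
Qed.

Lemma RI_cont f a b : a <= b -> (forall x, a <= x <= b -> continuity_pt f x) -> RI f a b.
Proof. intros H H0; exists (continuity_implies_RiemannInt H H0); auto. Qed.

Lemma RI_contg f a b : a <= b -> continuity f -> RI f a b.
Proof. intros; apply RI_cont; auto. Qed.

Lemma Int_chasles f a b c : RI f a b -> RI f b c -> RI f a c /\ Int f a c = Int f a b + Int f b c.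
Proof.
  intros [p1 _] [p2 _]. pose (p3 := RiemannInt_P24 p1 p2). split. exists p3; auto.
  rewrite (Int_eq _ _ _ p1), (Int_eq _ _ _ p2), (Int_eq _ _ _ p3). symmetry; apply RiemannInt_P26.
Qed.

Lemma RI_sub f a b c d : RI f a b -> a <= c -> c <= d -> d <= b -> RI f c d.
Proof.
  intros [p _] H1 H2 H3.
  pose (p1 := RiemannInt_P22 p (conj (Rle_trans _ _ _ H1 H2) H3)).
  exists (RiemannInt_P23 p1 (conj H1 H2)); auto.
Qed.

Lemma Int_lin f g a b l : RI f a b -> RI g a b ->
  RI (fun x => f x + l * g x) a b /\ Int (fun x => f x + l * g x) a b = Int f a b + l * Int g a b.
Proof.
  intros [p1 _] [p2 _]. pose (p3 := RiemannInt_P10 l p1 p2). split. exists p3; auto.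
  rewrite (Int_eq _ _ _ p1), (Int_eq _ _ _ p2), (Int_eq _ _ _ p3). apply RiemannInt_P13.
Qed.

Lemma Int_ext_open f g a b : a <= b -> RI f a b -> RI g a b ->
  (forall x, a < x < b -> f x = g x) -> Int f a b = Int g a b.
Proof.
  intros H [p1 _] [p2 _] E. rewrite (Int_eq _ _ _ p1), (Int_eq _ _ _ p2). apply RiemannInt_P18; auto.
Qed.

Lemma Int_le f g a b : a <= b -> RI f a b -> RI g a b ->
  (forall x, a < x < b -> f x <= g x) -> Int f a b <= Int g a b.
Proof.
  intros H [p1 _] [p2 _] E. rewrite (Int_eq _ _ _ p1), (Int_eq _ _ _ p2). apply RiemannInt_P19; auto.
Qed.

Lemma Int_const c a b : RI (fun _ => c) a b /\ Int (fun _ => c) a b = c * (b - a).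
Proof.
  split. exists (RiemannInt_P14 a b c); auto.
  change (Int (fct_cte c) a b = c * (b - a)). rewrite (Int_eq (fct_cte c) _ _ (RiemannInt_P14 a b c)). apply RiemannInt_P15.
Qed.

Lemma RI_ext f g a b : (forall x, Rmin a b <= x <= Rmax a b -> f x = g x) -> RI f a b -> RI g a b.
Proof. intros E [p _]. exists (Riemann_integrable_ext g E p); auto. Qed.



Lemma Int_ext f g a b : a <= b -> (forall x, a <= x <= b -> f x = g x) -> RI f a b ->
  RI g a b /\ Int f a b = Int g a b.
Proof.
  intros H E p. assert (p2 : RI g a b).
  { apply (RI_ext f); auto. intros x Hx; rewrite Rmin_left, Rmax_right in Hx; auto. }
  split; auto. apply Int_ext_open; auto. intros; apply E; lra.
Qed.

Lemma RI_open f g a b : a <= b -> RI g a b -> (forall x, a < x < b -> f x = g x) -> RI f a b.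
Proof.
  intros Hab [pg _] Heq.
  set (w := fun x => f x - g x).
  assert (Sw : IsStepFun w a b).
  { exists (cons a (cons b nil)). exists (cons 0 nil). unfold adapted_couple. repeat split.
    - unfold ordered_Rlist; intros i Hi; simpl in Hi; destruct i; simpl; [lra | lia].
    - simpl; rewrite Rmin_left; auto.
    - simpl; rewrite Rmax_right; auto.
    - intros i Hi; simpl in Hi; destruct i; [| lia]. simpl. intros x [Hx1 Hx2].
      unfold w; rewrite Heq; [ring|lra]. }
  assert (pw : Riemann_integrable w a b).
  { intro eps. exists (mkStepFun Sw). exists (mkStepFun (StepFun_P4 a b 0)). split.
    - intros t _. simpl. unfold fct_cte. rewrite Rminus_diag, Rabs_R0. lra.
    - rewrite StepFun_P18, Rmult_0_l, Rabs_R0. apply cond_pos. }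
  apply (RI_ext (fun x => g x + 1 * w x)).
  - intros; unfold w; ring.
  - exists (RiemannInt_P10 1 pg pw); auto.
Qed.

Lemma FTC G g a b : a <= b -> (forall x, a <= x <= b -> derivable_pt_lim G x (g x)) ->
  (forall x, a <= x <= b -> continuity_pt g x) -> RI g a b /\ Int g a b = G b - G a.
Proof.
  intros Hab HD HC. split. apply RI_cont; auto.
  assert (A1 := RiemannInt_P29 Hab HC).
  assert (A2 : antiderivative g G a b).
  { split; auto. intros x Hx. exists (exist _ (g x) (HD x Hx)). symmetry. apply derive_pt_eq_0. apply HD; auto. }
  destruct (antiderivative_Ucte g _ _ a b A1 A2) as [c Hc].
  rewrite (Int_eq _ _ _ (continuity_implies_RiemannInt Hab HC)).
  rewrite (RiemannInt_P20 Hab (FTC_P1 Hab HC)).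
  rewrite (Hc b), (Hc a); [ring | lra | lra].
Qed.

Lemma Dplus f g x l1 l2 : derivable_pt_lim f x l1 -> derivable_pt_lim g x l2 ->
  derivable_pt_lim (fun y => f y + g y) x (l1 + l2).
Proof. intros; apply (derivable_pt_lim_plus f g); auto. Qed.
Lemma Dminus f g x l1 l2 : derivable_pt_lim f x l1 -> derivable_pt_lim g x l2 ->
  derivable_pt_lim (fun y => f y - g y) x (l1 - l2).
Proof. intros; apply (derivable_pt_lim_minus f g); auto. Qed.
Lemma Dmult f g x l1 l2 : derivable_pt_lim f x l1 -> derivable_pt_lim g x l2 ->
  derivable_pt_lim (fun y => f y * g y) x (l1 * g x + f x * l2).
Proof. intros; apply (derivable_pt_lim_mult f g); auto. Qed.
Lemma Dconst c x : derivable_pt_lim (fun _ => c) x 0.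
Proof. apply (derivable_pt_lim_const c). Qed.
Lemma Dscal c f x l : derivable_pt_lim f x l -> derivable_pt_lim (fun y => c * f y) x (c * l).
Proof. intros; apply (derivable_pt_lim_scal f c); auto. Qed.
Lemma Dpow n x : derivable_pt_lim (fun y => y ^ n) x (INR n * x ^ pred n).
Proof. apply derivable_pt_lim_pow. Qed.
Lemma Dshift f x t l : derivable_pt_lim f (x - t) l -> derivable_pt_lim (fun y => f (y - t)) x l.
Proof.
  intros H eps He. destruct (H eps He) as [d Hd]. exists d. intros hh H1 H2.
  replace (x + hh - t) with (x - t + hh) by ring. apply Hd; auto.
Qed.
Lemma Dext f g x l : (forall y, f y = g y) -> derivable_pt_lim f x l -> derivable_pt_lim g x l.
Proof. intros E H. replace g with f; auto. apply functional_extensionality; auto. Qed.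

Lemma D_cont f x l : derivable_pt_lim f x l -> continuity_pt f x.
Proof. intros H. apply derivable_continuous_pt. exists l; auto. Qed.

Definition D1 (f f' : R -> R) := forall x, derivable_pt_lim f x (f' x).
Lemma D1_cont f f' : D1 f f' -> continuity f.
Proof. intros H x; eapply D_cont; apply H. Qed.

Lemma poly_D n c x : derivable_pt_lim (fun x => sum_f_R0 (fun i => c i * x ^ i) (S n)) x
   (sum_f_R0 (fun i => (c (S i) * INR (S i)) * x ^ i) n).
Proof.
  induction n.
  - simpl. apply (Dext (fun y => c 0%nat * 1 + c 1%nat * y)).
    { intros; simpl; ring. }
    replace (c 1%nat * 1 * 1) with (0 + c 1%nat * 1) by ring.
    apply Dplus. apply Dconst. apply Dscal. apply derivable_pt_lim_id.
  - apply (Dext (fun x => sum_f_R0 (fun i => c i * x ^ i) (S n) + c (S (S n)) * x ^ (S (S n)))).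
    { intros; reflexivity. }
    change (sum_f_R0 (fun i => c (S i) * INR (S i) * x ^ i) (S n)) with
      (sum_f_R0 (fun i => c (S i) * INR (S i) * x ^ i) n + c (S (S n)) * INR (S (S n)) * x ^ (S n)).
    apply Dplus; auto.
    replace (c (S (S n)) * INR (S (S n)) * x ^ S n) with (c (S (S n)) * (INR (S (S n)) * x ^ pred (S (S n)))) by (simpl; ring).
    apply Dscal. apply Dpow.
Qed.

Lemma poly_le_D n f f' : is_poly_le (S n) f -> D1 f f' -> is_poly_le n f'.
Proof.
  intros [c Hc] HD. exists (fun i => c (S i) * INR (S i)). intros x.
  apply (uniqueness_limite f x). apply HD.
  apply (Dext (fun x => sum_f_R0 (fun i => c i * x ^ i) (S n))).
  { intros; rewrite Hc; auto. }
  apply poly_D.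
Qed.

Lemma poly_le_0_D f f' : is_poly_le 0 f -> D1 f f' -> forall x, f' x = 0.
Proof.
  intros [c Hc] HD x. apply (uniqueness_limite f x). apply HD.
  apply (Dext (fun _ => c 0%nat)). { intros; rewrite Hc; simpl; ring. } apply Dconst.
Qed.

Lemma poly_has_D n f : is_poly_le (S n) f -> exists f', is_poly_le n f' /\ D1 f f'.
Proof.
  intros [c Hc]. exists (fun x => sum_f_R0 (fun i => (c (S i) * INR (S i)) * x ^ i) n). split.
  - exists (fun i => c (S i) * INR (S i)); auto.
  - intros x. apply (Dext (fun x => sum_f_R0 (fun i => c i * x ^ i) (S n))).
    { intros; rewrite Hc; auto. } apply poly_D.
Qed.

Lemma poly_cont n f : is_poly_le n f -> continuity f.
Proof.
  destruct n.
  - intros [c Hc]. replace f with (fun _ : R => c 0%nat * 1).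
    apply continuity_const. intros ? ?; auto.
    apply functional_extensionality; intros; rewrite Hc; simpl; ring.
  - intros H. destruct (poly_has_D _ _ H) as [f' [_ H']]. eapply D1_cont; eauto.
Qed.

Lemma cplus f g : continuity f -> continuity g -> continuity (fun x => f x + g x).
Proof. intros; apply (continuity_plus f g); auto. Qed.
Lemma cminus f g : continuity f -> continuity g -> continuity (fun x => f x - g x).
Proof. intros; apply (continuity_minus f g); auto. Qed.
Lemma cmult f g : continuity f -> continuity g -> continuity (fun x => f x * g x).
Proof. intros; apply (continuity_mult f g); auto. Qed.
Lemma cconst c : continuity (fun _ => c).
Proof. apply continuity_const. intros ? ?; auto. Qed.
Lemma cshift f t : continuity f -> continuity (fun x => f (x - t)).
Proof.
  intros H x. apply (continuity_pt_comp (fun x => x - t) f). 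
  apply (continuity_pt_minus id (fct_cte t)). apply derivable_continuous_pt, derivable_pt_id.
  apply continuity_pt_const; intros ? ?; auto. apply H.
Qed.
Lemma csq f : continuity f -> continuity (fun x => f x ^ 2).
Proof. intros H. replace (fun x => f x ^ 2) with (fun x => f x * f x). apply cmult; auto.
  apply functional_extensionality; intros; ring. Qed.

Lemma IBP u u' w w' a b : a <= b -> D1 u u' -> D1 w w' -> continuity u' -> continuity w' ->
  Int (fun x => u' x * w x) a b = u b * w b - u a * w a - Int (fun x => u x * w' x) a b.
Proof.
  intros Hab Hu Hw Cu Cw.
  assert (Cu0 := D1_cont _ _ Hu). assert (Cw0 := D1_cont _ _ Hw).
  destruct (FTC (fun x => u x * w x) (fun x => u' x * w x + 1 * (u x * w' x)) a b Hab) as [_ HF].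
  { intros x _. replace (u' x * w x + 1 * (u x * w' x)) with (u' x * w x + u x * w' x) by ring.
    apply Dmult; auto. }
  { intros x _. apply (cplus (fun x => u' x * w x) (fun x => 1 * (u x * w' x))).
    apply cmult; auto. apply cmult. apply cconst. apply cmult; auto. }
  destruct (Int_lin (fun x => u' x * w x) (fun x => u x * w' x) a b 1) as [_ HL].
  apply RI_contg; auto; apply cmult; auto.
  apply RI_contg; auto; apply cmult; auto.
  rewrite HL in HF. lra.
Qed.

Lemma Int_shift g t u w : u <= w -> continuity g ->
  Int (fun x => g (x - t)) u w = Int g (u - t) (w - t).
Proof.
  intros Huw Cg. assert (H' : u - t <= w - t) by lra.
  destruct (RiemannInt_P29 H' (fun x _ => Cg x)) as [HA _].
  set (G := primitive H' (FTC_P1 H' (fun x _ => Cg x))) in *.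
  assert (HD : forall x, u - t <= x <= w - t -> derivable_pt_lim G x (g x)).
  { intros x Hx. destruct (HA x Hx) as [[l Hl] E]. simpl in E. rewrite E; auto. }
  destruct (FTC G g (u - t) (w - t) H' HD (fun x _ => Cg x)) as [_ E1].
  destruct (FTC (fun x => G (x - t)) (fun x => g (x - t)) u w Huw) as [_ E2].
  { intros x Hx. apply Dshift. apply HD. lra. }
  { intros x _. apply cshift; auto. }
  rewrite E1, E2. auto.
Qed.

Definition Sm (E1 E2 : nat -> R -> R) (al y be : R) (i : nat) (w : R -> R) :=
  Int (fun x => E1 i x * w x) al y + Int (fun x => E2 i x * w x) y be.

Lemma IBPsum E1 E2 al y be i w w' :
  al <= y -> y <= be ->
  D1 (E1 i) (E1 (S i)) -> D1 (E2 i) (E2 (S i)) -> continuity (E1 (S i)) -> continuity (E2 (S i)) ->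
  E1 i al = 0 -> E2 i be = 0 -> E1 i y = E2 i y ->
  D1 w w' -> continuity w' ->
  Sm E1 E2 al y be (S i) w = - Sm E1 E2 al y be i w'.
Proof.
  intros H1 H2 D1' D2' C1 C2 Z1 Z2 Zy Dw Cw. unfold Sm.
  rewrite (IBP (E1 i) (E1 (S i)) w w' al y), (IBP (E2 i) (E2 (S i)) w w' y be); auto.
  rewrite Z1, Z2, Zy. ring.
Qed.

Lemma Int_zero a b : Int (fun _ => 0) a b = 0.
Proof. destruct (Int_const 0 a b) as [_ H]; rewrite H; ring. Qed.

Lemma Sm_zero E1 E2 al y be i : Sm E1 E2 al y be i (fun _ => 0) = 0.
Proof.
  unfold Sm. replace (fun x => E1 i x * 0) with (fun _ : R => 0).
  replace (fun x => E2 i x * 0) with (fun _ : R => 0). rewrite !Int_zero; ring.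
  all: apply functional_extensionality; intros; ring.
Qed.

Definition Ehyp (E1 E2 : nat -> R -> R) (al y be : R) (i : nat) :=
  D1 (E1 i) (E1 (S i)) /\ D1 (E2 i) (E2 (S i)) /\ continuity (E1 (S i)) /\ continuity (E2 (S i)) /\
  E1 i al = 0 /\ E2 i be = 0 /\ E1 i y = E2 i y.

Lemma orth E1 E2 al y be k : al <= y -> y <= be ->
  (forall i, (i <= k)%nat -> Ehyp E1 E2 al y be i) ->
  forall t, (t <= k)%nat -> forall q, is_poly_le t q -> Sm E1 E2 al y be (S t) q = 0.
Proof.
  intros H1 H2 HE. induction t; intros Ht q Hq.
  - destruct Hq as [c Hc].
    assert (Eq : q = fun _ => c 0%nat) by (apply functional_extensionality; intros; rewrite Hc; simpl; ring).
    destruct (HE 0%nat Ht) as (?&?&?&?&?&?&?).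
    rewrite (IBPsum E1 E2 al y be 0 q (fun _ => 0)); auto.
    rewrite Sm_zero; ring.
    rewrite Eq; intro; apply Dconst. apply cconst.
  - destruct (poly_has_D _ _ Hq) as [q' [Hq' Dq]].
    destruct (HE (S t) Ht) as (?&?&?&?&?&?&?).
    rewrite (IBPsum E1 E2 al y be (S t) q q'); auto.
    rewrite IHt; auto. ring. lia. eapply poly_cont; eauto.
Qed.

Lemma Int_3 f g h c d a b : a <= b -> continuity f -> continuity g -> continuity h ->
  Int (fun x => f x + c * g x + d * h x) a b = Int f a b + c * Int g a b + d * Int h a b.
Proof.
  intros Hab Cf Cg Ch.
  destruct (Int_lin f g a b c) as [R1 E1]; try apply RI_contg; auto.
  destruct (Int_lin (fun x => f x + c * g x) h a b d) as [R2 E2]; auto; try (apply RI_contg; auto).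
  rewrite E2, E1; auto.
Qed.

Lemma Int_nonneg f a b : a <= b -> continuity f -> (forall x, 0 <= f x) -> 0 <= Int f a b.
Proof.
  intros Hab Cf Hf. rewrite <- (Int_zero a b). apply Int_le; auto.
  apply (Int_const 0 a b). apply RI_contg; auto.
Qed.

Definition Qp (al : R) (i : nat) (x : R) := (x - al) ^ i / INR (fact i).

Lemma Qp_D al i : D1 (Qp al (S i)) (Qp al i).
Proof.
  intros x. unfold Qp.
  apply (Dext (fun x => / INR (fact (S i)) * (fun z => z ^ (S i)) (x - al))).
  { intros; unfold Rdiv; ring. }
  replace ((x - al) ^ i / INR (fact i)) with (/ INR (fact (S i)) * (INR (S i) * (x - al) ^ pred (S i))).
  apply Dscal. apply (Dshift (fun z => z ^ S i)). apply Dpow.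
  rewrite fact_simpl, mult_INR. simpl pred. field. split. apply INR_fact_neq_0.
  apply not_0_INR; lia.
Qed.

Lemma Qp_cont al i : continuity (Qp al i).
Proof.
  destruct i. unfold Qp; simpl. apply cconst.
  eapply D1_cont; apply Qp_D.
Qed.

Lemma Qp_bound al be i x : al <= x <= be -> Rabs (Qp al i x) <= (be - al) ^ i.
Proof.
  intros Hx. unfold Qp. rewrite Rabs_right.
  - assert (H1 : 1 <= INR (fact i)).
    { replace 1 with (INR 1) by reflexivity. apply le_INR. pose proof (lt_O_fact i); lia. }
    assert (H2 : (x - al) ^ i <= (be - al) ^ i) by (apply pow_incr; lra).
    assert (H3 : 0 <= (x - al) ^ i) by (apply pow_le; lra).
    unfold Rdiv. apply Rle_trans with ((x - al) ^ i); auto.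
    rewrite <- (Rmult_1_r ((x - al) ^ i)) at 2. apply Rmult_le_compat_l; auto.
    rewrite <- Rinv_1. apply Rinv_le_contravar; lra.
  - apply Rle_ge. unfold Rdiv. apply Rmult_le_pos. apply pow_le; lra.
    left; apply Rinv_0_lt_compat, INR_fact_lt_0.
Qed.

Lemma cell_lemma k al y be (R1 R2 P : nat -> R -> R) :
  al <= y -> y <= be ->
  (forall l, (l <= k)%nat -> D1 (R1 l) (R1 (S l))) -> continuity (R1 (S k)) ->
  (forall l, (l <= k)%nat -> D1 (R2 l) (R2 (S l))) -> continuity (R2 (S k)) ->
  (forall l, (l <= S k)%nat -> D1 (P l) (P (S l))) -> is_poly_le (2 * k + 1) (P 0%nat) ->
  (forall l, (l <= k)%nat -> R1 l y = R2 l y) ->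
  (forall l, (l <= k)%nat -> P l al = R1 l al) ->
  (forall l, (l <= k)%nat -> P l be = R2 l be) ->
  Int (fun x => P (S k) x ^ 2) al be <=
    Int (fun x => R1 (S k) x ^ 2) al y + Int (fun x => R2 (S k) x ^ 2) y be /\
  Rabs (Int (P 0%nat) al be - (Int (R1 0%nat) al y + Int (R2 0%nat) y be)) <=
    (be - al) ^ (S k) * ((be - al) + (Int (fun x => R1 (S k) x ^ 2) al y + Int (fun x => R2 (S k) x ^ 2) y be)) / 2.
Proof.
  intros Hay Hyb T1 C1 T2 C2 TP PP My Ma Mb.
  set (A := Int (fun x => R1 (S k) x ^ 2) al y + Int (fun x => R2 (S k) x ^ 2) y be).
  set (E1 := fun l x => R1 l x - P l x). set (E2 := fun l x => R2 l x - P l x).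
  assert (CP : forall l, (l <= S k)%nat -> continuity (P l)).
  { intros l Hl. eapply D1_cont; apply TP; auto. }
  assert (CR1 : forall l, (l <= S k)%nat -> continuity (R1 l)).
  { intros l Hl. destruct (Nat.eq_dec l (S k)) as [->|]; auto. eapply D1_cont; apply T1; lia. }
  assert (CR2 : forall l, (l <= S k)%nat -> continuity (R2 l)).
  { intros l Hl. destruct (Nat.eq_dec l (S k)) as [->|]; auto. eapply D1_cont; apply T2; lia. }
  assert (CE1 : forall l, (l <= S k)%nat -> continuity (E1 l)).
  { intros; unfold E1; apply cminus; auto. }
  assert (CE2 : forall l, (l <= S k)%nat -> continuity (E2 l)).
  { intros; unfold E2; apply cminus; auto. }
  assert (HE : forall i, (i <= k)%nat -> Ehyp E1 E2 al y be i).
  { intros i Hi. unfold Ehyp, E1, E2. repeat split.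
    - intro x; apply Dminus; [apply T1 | apply TP]; lia.
    - intro x; apply Dminus; [apply T2 | apply TP]; lia.
    - apply cminus; [apply CR1 | apply CP]; lia.
    - apply cminus; [apply CR2 | apply CP]; lia.
    - rewrite Ma; auto; ring.
    - rewrite Mb; auto; ring.
    - rewrite My; auto. }
  assert (PolyP : forall l, (l <= S k)%nat -> is_poly_le (2 * k + 1 - l) (P l)).
  { induction l; intros Hl. replace (2 * k + 1 - 0)%nat with (2 * k + 1)%nat by lia; auto.
    apply (poly_le_D _ (P l)). replace (S (2 * k + 1 - S l)) with (2 * k + 1 - l)%nat by lia.
    apply IHl; lia. apply TP; lia. }
  assert (Orth : Sm E1 E2 al y be (S k) (P (S k)) = 0).
  { apply (orth E1 E2 al y be k); auto. assert (H := PolyP (S k) (le_n _)). replace (2 * k + 1 - S k)%nat with k in H by lia. exact H. }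
  assert (Dec : forall u v, u <= v -> forall (R : nat -> R -> R), continuity (R (S k)) ->
     Int (fun x => R (S k) x ^ 2) u v =
     Int (fun x => P (S k) x ^ 2) u v + 2 * Int (fun x => (R (S k) x - P (S k) x) * P (S k) x) u v
       + 1 * Int (fun x => (R (S k) x - P (S k) x) ^ 2) u v).
  { intros u v Huv R CR. rewrite <- Int_3; auto.
    f_equal. apply functional_extensionality; intros; ring.
    apply csq; auto. apply cmult; auto; apply cminus; auto. apply csq; apply cminus; auto. }
  set (SE := Int (fun x => E1 (S k) x ^ 2) al y + Int (fun x => E2 (S k) x ^ 2) y be).
  assert (SEpos : 0 <= SE).
  { unfold SE; apply Rplus_le_le_0_compat; apply Int_nonneg; auto; try (apply csq; auto);
      intros; apply pow2_ge_0. }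
  assert (IntP : Int (fun x => P (S k) x ^ 2) al be =
          Int (fun x => P (S k) x ^ 2) al y + Int (fun x => P (S k) x ^ 2) y be).
  { apply Int_chasles; apply RI_contg; auto; apply csq; auto. }
  assert (IntPpos : 0 <= Int (fun x => P (S k) x ^ 2) al be).
  { apply Int_nonneg; try lra. apply csq; auto. intros; apply pow2_ge_0. }
  assert (AE : A = Int (fun x => P (S k) x ^ 2) al be + SE).
  { unfold A, SE. rewrite (Dec al y), (Dec y be); auto. rewrite IntP.
    unfold Sm, E1, E2 in Orth. unfold E1, E2. lra. }
  split. { lra. }
  assert (Chain : forall i, (i <= S k)%nat ->
     Sm E1 E2 al y be 0 (Qp al 0) = (-1) ^ i * Sm E1 E2 al y be i (Qp al i)).
  { induction i; intros Hi. simpl; ring.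
    rewrite IHi by lia. destruct (HE i) as (?&?&?&?&?&?&?); try lia.
    rewrite (IBPsum E1 E2 al y be i (Qp al (S i)) (Qp al i)); auto.
    simpl; ring. apply Qp_D. apply Qp_cont. }
  assert (M0 : Int (P 0%nat) al be - (Int (R1 0%nat) al y + Int (R2 0%nat) y be) =
               - Sm E1 E2 al y be 0 (Qp al 0)).
  { unfold Sm, E1, E2, Qp. simpl.
    replace (fun x => (R1 0%nat x - P 0%nat x) * (1 / 1)) with (fun x => R1 0%nat x + (-1) * P 0%nat x)
      by (apply functional_extensionality; intros; field).
    replace (fun x => (R2 0%nat x - P 0%nat x) * (1 / 1)) with (fun x => R2 0%nat x + (-1) * P 0%nat x)
      by (apply functional_extensionality; intros; field).
    assert (c0 : (0 <= S k)%nat) by lia.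
    destruct (Int_lin (R1 0%nat) (P 0%nat) al y (-1)) as [_ HH1]; try (apply RI_contg; auto).
    destruct (Int_lin (R2 0%nat) (P 0%nat) y be (-1)) as [_ HH2]; try (apply RI_contg; auto).
    destruct (Int_chasles (P 0%nat) al y be) as [_ HH3]; try (apply RI_contg; auto).
    rewrite HH1, HH2, HH3.
    ring. }
  rewrite M0, Rabs_Ropp, (Chain (S k)), Rabs_mult, pow_1_abs, Rmult_1_l by lia.
  set (hD := (be - al) ^ S k).
  assert (hDpos : 0 <= hD) by (apply pow_le; lra).
  assert (PW : forall (E : R -> R) x, al <= x <= be ->
     - (hD / 2 + hD / 2 * E x ^ 2) <= E x * Qp al (S k) x <= hD / 2 + hD / 2 * E x ^ 2).
  { intros E x Hx. assert (Hq := Qp_bound al be (S k) x Hx). fold hD in Hq.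
    assert (He : Rabs (E x) <= (1 + E x ^ 2) / 2).
    { assert (0 <= (Rabs (E x) - 1) ^ 2) by apply pow2_ge_0. rewrite <- (pow2_abs (E x)). nra. }
    assert (Habs : Rabs (E x * Qp al (S k) x) <= hD / 2 + hD / 2 * E x ^ 2).
    { rewrite Rabs_mult. apply Rle_trans with ((1 + E x ^ 2) / 2 * hD).
      apply Rmult_le_compat; auto; apply Rabs_pos. lra. }
    revert Habs; unfold Rabs; destruct Rcase_abs; lra. }
  assert (IB : forall (E : R -> R) u v, al <= u -> u <= v -> v <= be -> continuity E ->
     Rabs (Int (fun x => E x * Qp al (S k) x) u v) <= hD / 2 * (v - u) + hD / 2 * Int (fun x => E x ^ 2) u v).
  { intros E u v H1 H2 H3 CE.
    destruct (Int_lin (fun _ => hD / 2) (fun x => E x ^ 2) u v (hD / 2)) as [RB IBv].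
    apply (Int_const). apply RI_contg; auto; apply csq; auto.
    destruct (Int_const (hD / 2) u v) as [_ IC]. rewrite IC in IBv.
    assert (RQ : RI (fun x => E x * Qp al (S k) x) u v) by (apply RI_contg; auto; apply cmult; auto; apply Qp_cont).
    apply Rabs_le. split.
    - destruct (Int_lin (fun _ => 0) (fun x => hD / 2 + hD / 2 * E x ^ 2) u v (-1)) as [RB2 IB2].
      apply Int_const. auto.
      rewrite Int_zero in IB2.
      assert (Int (fun x => 0 + -1 * (hD / 2 + hD / 2 * E x ^ 2)) u v <= Int (fun x => E x * Qp al (S k) x) u v).
      { apply Int_le; auto. intros x Hx. destruct (PW E x); lra. }
      lra.
    - rewrite <- IBv. apply Int_le; auto. intros x Hx. destruct (PW E x); lra. }
  unfold Sm. eapply Rle_trans. apply Rabs_triang.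
  assert (I1 := IB (E1 (S k)) al y (Rle_refl _) Hay Hyb (CE1 (S k) (le_n _))).
  assert (I2 := IB (E2 (S k)) y be Hay Hyb (Rle_refl _) (CE2 (S k) (le_n _))).
  fold hD. rewrite AE. unfold SE in *. nra.
Qed.

Lemma choice_nat {A : Type} (N : nat) (P : nat -> A -> Prop) (d : A) :
  (forall j, (j < N)%nat -> exists x, P j x) -> exists f : nat -> A, forall j, (j < N)%nat -> P j (f j).
Proof.
  intros H.
  assert (H' : forall j, exists x, (j < N)%nat -> P j x).
  { intros j. destruct (Nat.lt_ge_cases j N) as [Hj|Hj].
    - destruct (H j Hj) as [x Hx]; exists x; auto.
    - exists d; intros; lia. }
  exists (fun j => proj1_sig (constructive_indefinite_description _ (H' j))).
  intros j Hj. apply (proj2_sig (constructive_indefinite_description _ (H' j))); auto.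
Qed.

Fixpoint sumN (f : nat -> R) (n : nat) : R :=
  match n with O => 0 | S n => sumN f n + f n end.

Lemma sumN_le f g n : (forall j, (j < n)%nat -> f j <= g j) -> sumN f n <= sumN g n.
Proof. induction n; simpl; intros H. lra. assert (f n <= g n) by (apply H; lia).
  assert (sumN f n <= sumN g n) by (apply IHn; intros; apply H; lia). lra. Qed.
Lemma sumN_plus f g n : sumN (fun j => f j + g j) n = sumN f n + sumN g n.
Proof. induction n; simpl. ring. rewrite IHn; ring. Qed.
Lemma sumN_scal c f n : sumN (fun j => c * f j) n = c * sumN f n.
Proof. induction n; simpl. ring. rewrite IHn; ring. Qed.
Lemma sumN_const c n : sumN (fun _ => c) n = INR n * c.
Proof. induction n; simpl sumN. simpl; ring. rewrite IHn, S_INR; ring. Qed.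
Lemma sumN_tele f n : sumN (fun j => f (S j) - f j) n = f n - f O.
Proof. induction n; simpl. ring. rewrite IHn; ring. Qed.
Lemma sumN_ext f g n : (forall j, (j < n)%nat -> f j = g j) -> sumN f n = sumN g n.
Proof. induction n; simpl; intros H. auto. rewrite IHn, H; [auto|lia|intros; apply H; lia]. Qed.
Lemma sumN_abs f n : Rabs (sumN f n) <= sumN (fun j => Rabs (f j)) n.
Proof. induction n; simpl. - rewrite Rabs_R0; lra. - eapply Rle_trans. apply Rabs_triang. lra. Qed.


Lemma mesh_pos a b N : a < b -> (1 <= N)%nat -> 0 < mesh a b N.
Proof. intros; unfold mesh. apply Rdiv_lt_0_compat. lra. apply lt_0_INR; lia. Qed.

Lemma grid_S a b N j : grid a b N (S j) = grid a b N j + mesh a b N.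
Proof. unfold grid; rewrite S_INR; ring. Qed.
Lemma grid_0 a b N : grid a b N 0 = a.
Proof. unfold grid; simpl; ring. Qed.
Lemma grid_N a b N : (1 <= N)%nat -> grid a b N N = b.
Proof. intros; unfold grid, mesh. field. apply not_0_INR; lia. Qed.
Lemma LNh a b N : (1 <= N)%nat -> b - a = INR N * mesh a b N.
Proof. intros; unfold mesh; field. apply not_0_INR; lia. Qed.

Lemma grid_mono a b N i j : a < b -> (1 <= N)%nat -> (i <= j)%nat -> grid a b N i <= grid a b N j.
Proof.
  intros. unfold grid. assert (0 < mesh a b N) by (apply mesh_pos; auto).
  apply le_INR in H1. nra.
Qed.

Lemma locate a b N t : a < b -> (1 <= N)%nat ->
  exists c p, (c < N)%nat /\ grid a b N c + IZR p * (b - a) <= t < grid a b N (S c) + IZR p * (b - a).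
Proof.
  intros Hab HN. set (h := mesh a b N). assert (Hh : 0 < h) by (apply mesh_pos; auto).
  set (u := (t - a) / h). destruct (archimed u) as [A1 A2].
  set (z := (up u - 1)%Z).
  assert (Z1 : IZR z <= u) by (unfold z; rewrite minus_IZR; simpl; lra).
  assert (Z2 : u < IZR z + 1) by (unfold z; rewrite minus_IZR; simpl; lra).
  assert (NZ : (Z.of_nat N > 0)%Z) by lia.
  destruct (Z.mod_pos_bound z (Z.of_nat N)) as [M1 M2]; [lia|].
  exists (Z.to_nat (z mod Z.of_nat N)), (z / Z.of_nat N)%Z. split. lia.
  assert (E : IZR z = IZR (z mod Z.of_nat N) + IZR (z / Z.of_nat N) * INR N).
  { rewrite INR_IZR_INZ, <- mult_IZR, <- plus_IZR. f_equal. rewrite (Z.div_mod z (Z.of_nat N)) at 1; lia. }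
  rewrite grid_S. unfold grid. rewrite INR_IZR_INZ, Z2Nat.id by lia. fold h.
  rewrite (LNh a b N HN). fold h.
  assert (Hu : IZR z * h <= t - a < (IZR z + 1) * h).
  { unfold u in *. split. apply (Rmult_le_compat_r h) in Z1; [|lra]. unfold Rdiv in Z1.
    rewrite Rmult_assoc, Rinv_l, Rmult_1_r in Z1; lra.
    apply (Rmult_lt_compat_r h) in Z2; [|lra]. unfold Rdiv in Z2.
    rewrite Rmult_assoc, Rinv_l, Rmult_1_r in Z2; lra. }
  rewrite E in Hu. nra.
Qed.

Lemma locate_in a b N x : a < b -> (1 <= N)%nat -> a <= x <= b ->
  exists c, (c < N)%nat /\ grid a b N c <= x <= grid a b N (S c).
Proof.
  intros Hab HN Hx. destruct (locate a b N x Hab HN) as [c [p [Hc [H1 H2]]]].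
  assert (G1 : a <= grid a b N c).
  { pose proof (grid_mono a b N 0 c Hab HN ltac:(lia)) as HH; rewrite grid_0 in HH; lra. }
  assert (G2 : grid a b N (S c) <= b).
  { pose proof (grid_mono a b N (S c) N Hab HN ltac:(lia)) as HH; rewrite (grid_N a b N HN) in HH; lra. }
  destruct (Z.lt_trichotomy p 0) as [Hp|[Hp|Hp]].
  - assert (Hp' : (p <= -1)%Z) by lia. apply IZR_le in Hp'.
    exfalso. nra.
  - subst p. exists c; split; auto. simpl in *. lra.
  - exists (N - 1)%nat. split. lia.
    assert (Hp' : (1 <= p)%Z) by lia. apply IZR_le in Hp'.
    replace (S (N - 1)) with N by lia. rewrite grid_N; auto.
    assert (x = b) by nra. subst x. split; [|lra].
    pose proof (grid_mono a b N (N-1) N Hab HN ltac:(lia)) as HH; rewrite (grid_N a b N HN) in HH; lra.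
Qed.

Lemma perZ (f : R -> R) L : (forall x, f (x + L) = f x) -> forall p x, f (x + IZR p * L) = f x.
Proof.
  intros H.
  assert (Hn : forall n x, f (x + INR n * L) = f x).
  { induction n; intros x. simpl; rewrite Rmult_0_l, Rplus_0_r; auto.
    rewrite S_INR. replace (x + (INR n + 1) * L) with (x + INR n * L + L) by ring. rewrite H; auto. }
  intros p x. destruct p.
  - simpl; rewrite Rmult_0_l, Rplus_0_r; auto.
  - rewrite <- positive_nat_Z, <- INR_IZR_INZ. apply Hn.
  - rewrite <- Pos2Z.opp_pos, opp_IZR, <- positive_nat_Z, <- INR_IZR_INZ.
    rewrite <- (Hn (Pos.to_nat p) (x + - INR (Pos.to_nat p) * L)). f_equal; ring.
Qed.

Lemma CS a b N g : a < b -> (1 <= N)%nat ->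
  (forall j, (j < N)%nat -> RI g (grid a b N j) (grid a b N (S j))) ->
  forall n, (n <= N)%nat -> RI g a (grid a b N n) /\
    Int g a (grid a b N n) = sumN (fun j => Int g (grid a b N j) (grid a b N (S j))) n.
Proof.
  intros Hab HN H. induction n; intros Hn.
  - rewrite grid_0. split. exists (RiemannInt_P7 g a); auto.
    simpl. rewrite (Int_eq _ _ _ (RiemannInt_P7 g a)). apply RiemannInt_P9.
  - destruct IHn as [R1 E1]; [lia|].
    destruct (Int_chasles g a (grid a b N n) (grid a b N (S n)) R1 (H n ltac:(lia))) as [R2 E2].
    split; auto. rewrite E2, E1. reflexivity.
Qed.

Lemma RI_cell a b N g gc j : a < b -> (1 <= N)%nat -> continuity gc ->
  (forall x, grid a b N j < x < grid a b N (S j) -> g x = gc x) ->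
  RI g (grid a b N j) (grid a b N (S j)).
Proof.
  intros Hab HN Cg Eg. assert (Hh := mesh_pos a b N Hab HN).
  apply (RI_open g gc). rewrite grid_S; lra. apply RI_contg; auto. rewrite grid_S; lra. auto.
Qed.

Lemma RI_ab a b N g : a < b -> (1 <= N)%nat ->
  (forall j, (j < N)%nat -> RI g (grid a b N j) (grid a b N (S j))) ->
  RI g a b /\ Int g a b = sumN (fun j => Int g (grid a b N j) (grid a b N (S j))) N.
Proof.
  intros Hab HN H. rewrite <- (grid_N a b N HN) at 1 2. apply CS; auto.
Qed.

Lemma prim a b N g (gc : nat -> R -> R) : a < b -> (1 <= N)%nat ->
  (forall j, (j < N)%nat -> continuity (gc j) /\
      forall x, grid a b N j < x < grid a b N (S j) -> g x = gc j x) ->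
  exists Phi : R -> R, (forall x, Phi (x + (b - a)) = Phi x + Int g a b) /\
    forall c p s u w, (c < N)%nat -> u <= w ->
      grid a b N c <= u - s - IZR p * (b - a) -> w - s - IZR p * (b - a) <= grid a b N (S c) ->
      Phi (w - s) - Phi (u - s) = Int (fun t => gc c (t - s - IZR p * (b - a))) u w.
Proof.
  intros Hab HN H. set (L := b - a). set (E0 := Int g a b).
  assert (Rcell : forall j, (j < N)%nat -> RI g (grid a b N j) (grid a b N (S j))).
  { intros j Hj. destruct (H j Hj). eapply RI_cell; eauto. }
  destruct (RI_ab a b N g Hab HN Rcell) as [Rab _].
  set (Phi0 := fun x => Int g a x).
  assert (P0diff : forall u w, a <= u -> u <= w -> w <= b -> Phi0 w - Phi0 u = Int g u w).
  { intros u w H1 H2 H3. unfold Phi0.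
    assert (r1 : RI g a u) by (apply (RI_sub g a b); [exact Rab|lra..]).
    assert (r2 : RI g u w) by (apply (RI_sub g a b); [exact Rab|lra..]).
    destruct (Int_chasles g a u w r1 r2) as [_ HH]. rewrite HH. ring. }
  assert (P0a : Phi0 a = 0).
  { unfold Phi0. rewrite (Int_eq _ _ _ (RiemannInt_P7 g a)). apply RiemannInt_P9. }
  set (fl := fun x => (up ((x - a) / L) - 1)%Z).
  assert (Hfl : forall x, a <= x - IZR (fl x) * L < b).
  { intros x. destruct (archimed ((x - a) / L)) as [A1 A2]. unfold fl. rewrite minus_IZR. simpl.
    assert (HL : 0 < L) by (unfold L; lra).
    set (q := IZR (up ((x - a) / L))) in *.
    assert (B1 : (x - a) / L * L = x - a) by (field; lra).
    split; unfold L in *; nra. }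
  set (Phi := fun x => Phi0 (x - IZR (fl x) * L) + IZR (fl x) * E0).
  assert (PhiP : forall x p, a <= x - IZR p * L <= b -> Phi x = Phi0 (x - IZR p * L) + IZR p * E0).
  { intros x p Hp. unfold Phi. destruct (Hfl x) as [F1 F2].
    assert (HL : 0 < L) by (unfold L; lra).
    assert (D1' : -1 < IZR (fl x) - IZR p < 1 \/ IZR (fl x) - IZR p = 1 \/ IZR (fl x) - IZR p = -1 ).
    { assert (Hd : (IZR (fl x) - IZR p) * L <= L /\ - L < (IZR (fl x) - IZR p) * L) by (unfold L in *; nra).
      destruct Hd as [Hd1 Hd2].
      assert (-1 < IZR (fl x) - IZR p <= 1) by (split; nra). lra. }
    rewrite <- minus_IZR in D1'.
    destruct D1' as [D|[D|D]].
    - destruct D as [D1 D2]. apply lt_IZR in D1. apply lt_IZR in D2.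
      assert (fl x = p) by lia. rewrite H0; auto.
    - apply eq_IZR in D. assert (fl x = p + 1)%Z by lia. rewrite H0 in *. rewrite plus_IZR in *.
      assert (x - IZR p * L = b) by (unfold L in *; lra).
      assert (x - (IZR p + 1) * L = a) by (unfold L in *; lra). rewrite H1, H2, P0a.
      unfold Phi0, E0. fold L. ring_simplify. rewrite <- H1. fold (Phi0 (x - IZR p * L)). rewrite H1. unfold Phi0; ring.
    - apply eq_IZR in D. assert (fl x = p - 1)%Z by lia. rewrite H0 in *. rewrite minus_IZR in *.
      exfalso. unfold L in *. nra. }
  exists Phi. split.
  - intros x. rewrite (PhiP (x + L) (fl x + 1)%Z).
    unfold Phi. rewrite plus_IZR. fold L. replace (x + L - (IZR (fl x) + 1) * L) with (x - IZR (fl x) * L) by ring.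
    ring. rewrite plus_IZR. fold L. destruct (Hfl x). split; nra.
  - intros c p s u w Hc Huw H1 H2.
    assert (G1 : a <= grid a b N c).
    { pose proof (grid_mono a b N 0 c Hab HN ltac:(lia)) as HH; rewrite grid_0 in HH; lra. }
    assert (G2 : grid a b N (S c) <= b).
    { pose proof (grid_mono a b N (S c) N Hab HN ltac:(lia)) as HH; rewrite (grid_N a b N HN) in HH; lra. }
    fold L in H1, H2 |- *.
    rewrite (PhiP (w - s) p), (PhiP (u - s) p) by lra.
    replace (Phi0 (w - s - IZR p * L) + IZR p * E0 - (Phi0 (u - s - IZR p * L) + IZR p * E0))
      with (Phi0 (w - s - IZR p * L) - Phi0 (u - s - IZR p * L)) by ring.
    rewrite P0diff by lra. destruct (H c Hc) as [Cg Eg].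
    replace (fun t => gc c (t - s - IZR p * L)) with (fun t => gc c (t - (s + IZR p * L)))
      by (apply functional_extensionality; intros; f_equal; ring).
    rewrite Int_shift; auto.
    replace (u - (s + IZR p * L)) with (u - s - IZR p * L) by ring.
    replace (w - (s + IZR p * L)) with (w - s - IZR p * L) by ring.
    apply Int_ext_open. lra. apply (RI_sub g a b); [exact Rab|lra..]. apply RI_contg; auto. lra.
    intros x Hx. apply Eg. lra.
Qed.

Lemma cell_step k a b N v dt (F Pp : nat -> R -> R) (Qf : nat -> nat -> R -> R) (Phi Psi : R -> R) j :
  a < b -> (1 <= N)%nat -> (j < N)%nat ->
  (forall l x, (l <= S k)%nat -> F l (x + (b - a)) = F l x) ->
  (forall c, (c < N)%nat -> (forall l, (l <= k)%nat -> D1 (Qf c l) (Qf c (S l))) /\ continuity (Qf c (S k)) /\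
      (forall l x, (l <= k)%nat -> grid a b N c <= x <= grid a b N (S c) -> F l x = Qf c l x)) ->
  (forall c p s u w, (c < N)%nat -> u <= w ->
      grid a b N c <= u - s - IZR p * (b - a) -> w - s - IZR p * (b - a) <= grid a b N (S c) ->
      Phi (w - s) - Phi (u - s) = Int (fun t => Qf c (S k) (t - s - IZR p * (b - a)) ^ 2) u w) ->
  (forall c p s u w, (c < N)%nat -> u <= w ->
      grid a b N c <= u - s - IZR p * (b - a) -> w - s - IZR p * (b - a) <= grid a b N (S c) ->
      Psi (w - s) - Psi (u - s) = Int (fun t => Qf c 0%nat (t - s - IZR p * (b - a))) u w) ->
  is_poly_le (2 * k + 1) (Pp 0%nat) -> deriv_tower (S k) Pp ->
  (forall l, (l <= k)%nat -> Pp l (grid a b N j) = F l (grid a b N j - v * dt) /\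
                          Pp l (grid a b N (S j)) = F l (grid a b N (S j) - v * dt)) ->
  Int (fun x => Pp (S k) x ^ 2) (grid a b N j) (grid a b N (S j)) <=
     Phi (grid a b N (S j) - v * dt) - Phi (grid a b N j - v * dt) /\
  Rabs (Int (Pp 0%nat) (grid a b N j) (grid a b N (S j)) -
        (Psi (grid a b N (S j) - v * dt) - Psi (grid a b N j - v * dt))) <=
     mesh a b N ^ (S k) * (mesh a b N + (Phi (grid a b N (S j) - v * dt) - Phi (grid a b N j - v * dt))) / 2.
Proof.
  intros Hab HN Hj Fper HQ HPhi HPsi PP PT PM.
  set (s := v * dt). set (L := b - a). set (h := mesh a b N).
  assert (Hh : 0 < h) by (apply mesh_pos; auto).
  assert (HL : L = INR N * h) by (apply LNh; auto).
  set (al := grid a b N j). set (be := grid a b N (S j)).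
  assert (Hbe : be = al + h) by (apply grid_S).
  assert (FperZ : forall l p x, (l <= S k)%nat -> F l (x + IZR p * L) = F l x).
  { intros l p x Hl. apply (perZ (F l) L); intros; apply Fper; auto. }
  destruct (locate a b N (al - s) Hab HN) as [c [p [Hc [Hl1 Hl2]]]]. fold L in Hl1, Hl2.
  assert (C2 : exists c2 p2, (c2 < N)%nat /\ grid a b N c2 + IZR p2 * L = grid a b N (S c) + IZR p * L).
  { destruct (Nat.eq_dec (S c) N) as [E|E].
    - exists 0%nat, (p + 1)%Z. split. lia. rewrite grid_0, plus_IZR, E, grid_N; auto. unfold L; ring.
    - exists (S c), p. split. lia. auto. }
  destruct C2 as [c2 [p2 [Hc2 Hcp]]].
  assert (gS : forall i, grid a b N (S i) = grid a b N i + h) by (intros; apply grid_S).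
  set (y := grid a b N (S c) + IZR p * L + s).
  set (R1 := fun l x => Qf c l (x - s - IZR p * L)).
  set (R2 := fun l x => Qf c2 l (x - s - IZR p2 * L)).
  destruct (HQ c Hc) as [T1 [CC1 E1]]. destruct (HQ c2 Hc2) as [T2 [CC2 E2]].
  assert (Dsh : forall (Q : nat -> R -> R) t, (forall l, (l <= k)%nat -> D1 (Q l) (Q (S l))) ->
            forall l, (l <= k)%nat -> D1 (fun x => Q l (x - s - t)) (fun x => Q (S l) (x - s - t))).
  { intros Q t HT l Hl x. apply (Dext (fun x => Q l (x - (s + t)))). intros; f_equal; ring.
    replace (x - s - t) with (x - (s + t)) by ring. apply Dshift. apply HT; auto. }
  assert (Csh : forall (g : R -> R) t, continuity g -> continuity (fun x => g (x - s - t))).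
  { intros g t Cg. replace (fun x => g (x - s - t)) with (fun x => g (x - (s + t))).
    apply cshift; auto. apply functional_extensionality; intros; f_equal; ring. }
  assert (Hay : al <= y) by (unfold y; lra).
  assert (Hyb : y <= be) by (unfold y; rewrite Hbe, gS; lra).
  assert (CL := cell_lemma k al y be R1 R2 Pp Hay Hyb).
  destruct CL as [CLa CLb].
  - intros l Hl; apply Dsh; auto.
  - apply Csh; auto.
  - intros l Hl; apply Dsh; auto.
  - apply Csh; auto.
  - intros l Hl x; apply PT; auto.
  - exact PP.
  - intros l Hl. unfold R1, R2, y.
    replace (grid a b N (S c) + IZR p * L + s - s - IZR p * L) with (grid a b N (S c)) by ring.
    replace (grid a b N (S c) + IZR p * L + s - s - IZR p2 * L) with (grid a b N c2) by lra.
    rewrite <- (E1 l (grid a b N (S c))) by (first [lia | split; [rewrite gS; lra | lra]]).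
    rewrite <- (E2 l (grid a b N c2)) by (first [lia | split; [lra | rewrite gS; lra]]).
    rewrite <- (FperZ l p2 (grid a b N c2)) by lia. rewrite Hcp.
    rewrite (FperZ l p (grid a b N (S c))) by lia. reflexivity.
  - intros l Hl. destruct (PM l Hl) as [M1 _]. fold al s in M1. rewrite M1. unfold R1.
    rewrite <- (E1 l (al - s - IZR p * L)) by (first [lia | rewrite gS in *; lra]).
    rewrite <- (FperZ l p (al - s - IZR p * L)) by lia. f_equal; ring.
  - intros l Hl. destruct (PM l Hl) as [_ M2]. fold be s in M2. rewrite M2. unfold R2.
    rewrite <- (E2 l (be - s - IZR p2 * L)) by (first [lia | rewrite gS in *; lra]).
    rewrite <- (FperZ l p2 (be - s - IZR p2 * L)) by lia. f_equal; ring.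
  -
    assert (Ph1 : Int (fun x => R1 (S k) x ^ 2) al y = Phi (y - s) - Phi (al - s)).
    { symmetry. apply (HPhi c p s al y Hc Hay); unfold y, L in *; lra. }
    assert (Ph2 : Int (fun x => R2 (S k) x ^ 2) y be = Phi (be - s) - Phi (y - s)).
    { symmetry. apply (HPhi c2 p2 s y be Hc2 Hyb); unfold y, L in *; rewrite ?gS in *; lra. }
    assert (Ps1 : Int (R1 0%nat) al y = Psi (y - s) - Psi (al - s)).
    { symmetry. apply (HPsi c p s al y Hc Hay); unfold y, L in *; lra. }
    assert (Ps2 : Int (R2 0%nat) y be = Psi (be - s) - Psi (y - s)).
    { symmetry. apply (HPsi c2 p2 s y be Hc2 Hyb); unfold y, L in *; rewrite ?gS in *; lra. }
    rewrite Ph1, Ph2 in CLa, CLb. rewrite Ps1, Ps2 in CLb.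
    replace (be - al) with h in CLb by lra. split. lra.
    replace (Psi (be - s) - Psi (al - s)) with (Psi (y - s) - Psi (al - s) + (Psi (be - s) - Psi (y - s))) by ring.
    replace (Phi (be - s) - Phi (al - s)) with (Phi (y - s) - Phi (al - s) + (Phi (be - s) - Phi (y - s))) by ring.
    exact CLb.
Qed.

Definition good k a b N (F : nat -> R -> R) :=
  (forall l x, (l <= S k)%nat -> F l (x + (b - a)) = F l x) /\
  forall j, (j < N)%nat -> exists Q : nat -> R -> R,
    (forall l, (l <= k)%nat -> D1 (Q l) (Q (S l))) /\ continuity (Q (S k)) /\
    (forall l x, (l <= k)%nat -> grid a b N j <= x <= grid a b N (S j) -> F l x = Q l x) /\
    (forall x, grid a b N j < x < grid a b N (S j) -> F (S k) x = Q (S k) x).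

Lemma good_RI k a b N F : a < b -> (1 <= N)%nat -> good k a b N F ->
  RI (fun x => F (S k) x ^ 2) a b /\
  (forall j, (j < N)%nat -> RI (fun x => F (S k) x ^ 2) (grid a b N j) (grid a b N (S j))).
Proof.
  intros Hab HN [_ HG].
  assert (H : forall j, (j < N)%nat -> RI (fun x => F (S k) x ^ 2) (grid a b N j) (grid a b N (S j))).
  { intros j Hj. destruct (HG j Hj) as [Q (T & C & E1 & E2)].
    apply (RI_cell a b N _ (fun x => Q (S k) x ^ 2)); auto. apply csq; auto.
    intros x Hx; rewrite E2; auto. }
  split; auto. apply (RI_ab a b N); auto.
Qed.

Lemma step k a b N v dt F G : a < b -> (1 <= N)%nat -> good k a b N F -> jet_step k a b v dt N F G ->
  good k a b N G /\
  Int (fun x => G (S k) x ^ 2) a b <= Int (fun x => F (S k) x ^ 2) a b /\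
  Rabs (Int (G 0%nat) a b - Int (F 0%nat) a b) <=
    mesh a b N ^ (S k) * ((b - a) + Int (fun x => F (S k) x ^ 2) a b) / 2.
Proof.
  intros Hab HN [Fper Fc] [Gper Gc].
  set (s := v * dt). set (h := mesh a b N).
  assert (Hh : 0 < h) by (apply mesh_pos; auto).
  destruct (choice_nat N _ (fun _ _ => 0) Fc) as [Qf HQf].
  destruct (prim a b N (fun x => F (S k) x ^ 2) (fun c x => Qf c (S k) x ^ 2) Hab HN) as [Phi [Phiper HPhi]].
  { intros j Hj. destruct (HQf j Hj) as (T & C & E1 & E2). split. apply csq; auto.
    intros x Hx; rewrite E2; auto. }
  destruct (prim a b N (F 0%nat) (fun c => Qf c 0%nat) Hab HN) as [Psi [Psiper HPsi]].
  { intros j Hj. destruct (HQf j Hj) as (T & C & E1 & E2). split. eapply D1_cont; apply T; lia.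
    intros x Hx; rewrite E1; auto; lia || lra. }
  assert (HQ : forall c, (c < N)%nat -> (forall l, (l <= k)%nat -> D1 (Qf c l) (Qf c (S l))) /\
      continuity (Qf c (S k)) /\
      (forall l x, (l <= k)%nat -> grid a b N c <= x <= grid a b N (S c) -> F l x = Qf c l x)).
  { intros c Hc. destruct (HQf c Hc) as (T & C & E1 & E2). auto. }
  assert (Cell : forall j, (j < N)%nat ->
     RI (fun x => G (S k) x ^ 2) (grid a b N j) (grid a b N (S j)) /\
     RI (G 0%nat) (grid a b N j) (grid a b N (S j)) /\
     Int (fun x => G (S k) x ^ 2) (grid a b N j) (grid a b N (S j)) <=
       Phi (grid a b N (S j) - s) - Phi (grid a b N j - s) /\
     Rabs (Int (G 0%nat) (grid a b N j) (grid a b N (S j)) -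
        (Psi (grid a b N (S j) - s) - Psi (grid a b N j - s))) <=
     h ^ (S k) * (h + (Phi (grid a b N (S j) - s) - Phi (grid a b N j - s))) / 2).
  { intros j Hj. destruct (Gc j Hj) as [P (PP & PT & PE1 & PE2 & PM)].
    assert (CPD : continuity (P (S k))) by (eapply D1_cont; intro x; apply PT; lia).
    assert (CP0 : continuity (P 0%nat)) by (eapply D1_cont; intro x; apply PT; lia).
    assert (Hc := grid_S a b N j). fold h in Hc.
    assert (R1 : RI (fun x => G (S k) x ^ 2) (grid a b N j) (grid a b N (S j))).
    { apply (RI_cell a b N _ (fun x => P (S k) x ^ 2)); auto. apply csq; auto.
      intros x Hx; rewrite PE2; auto. }
    assert (R2 : RI (G 0%nat) (grid a b N j) (grid a b N (S j))).
    { apply (RI_cell a b N _ (P 0%nat)); auto. intros x Hx; rewrite PE1; auto; lia || lra. }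
    destruct (cell_step k a b N v dt F P Qf Phi Psi j Hab HN Hj Fper HQ HPhi HPsi PP PT PM) as [C1 C2].
    fold s h in C1, C2.
    assert (HL : grid a b N j <= grid a b N (S j)) by lra.
    assert (X1 : Int (fun x => G (S k) x ^ 2) (grid a b N j) (grid a b N (S j)) =
                 Int (fun x => P (S k) x ^ 2) (grid a b N j) (grid a b N (S j))).
    { apply Int_ext_open; auto. apply RI_contg; auto. apply csq; auto. intros x Hx; rewrite PE2; auto. }
    assert (X2 : Int (G 0%nat) (grid a b N j) (grid a b N (S j)) = Int (P 0%nat) (grid a b N j) (grid a b N (S j))).
    { apply Int_ext_open; auto. apply RI_contg; auto. intros x Hx; rewrite PE1; auto; lia || lra. }
    rewrite X1, X2. auto. }
  assert (LN := LNh a b N HN). fold h in LN.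
  assert (gN := grid_N a b N HN). assert (g0 := grid_0 a b N).
  assert (PhiT : Int (fun x => F (S k) x ^ 2) a b = Phi (b - s) - Phi (a - s)).
  { replace (b - s) with ((a - s) + (b - a)) by ring. rewrite Phiper; ring. }
  assert (PsiT : Int (F 0%nat) a b = Psi (b - s) - Psi (a - s)).
  { replace (b - s) with ((a - s) + (b - a)) by ring. rewrite Psiper; ring. }
  assert (TeleP : sumN (fun j => Phi (grid a b N (S j) - s) - Phi (grid a b N j - s)) N = Phi (b - s) - Phi (a - s)).
  { rewrite (sumN_tele (fun j => Phi (grid a b N j - s))). rewrite gN, g0; auto. }
  assert (TeleS : sumN (fun j => Psi (grid a b N (S j) - s) - Psi (grid a b N j - s)) N = Psi (b - s) - Psi (a - s)).
  { rewrite (sumN_tele (fun j => Psi (grid a b N j - s))). rewrite gN, g0; auto. }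
  destruct (RI_ab a b N (fun x => G (S k) x ^ 2) Hab HN) as [_ SumE].
  { intros j Hj; apply Cell; auto. }
  destruct (RI_ab a b N (G 0%nat) Hab HN) as [_ SumM].
  { intros j Hj; apply Cell; auto. }
  split; [|split].
  - split; auto. intros j Hj. destruct (Gc j Hj) as [P (PP & PT & PE1 & PE2 & PM)].
    exists P. repeat split; auto.
    + intros l Hl x; apply PT; lia.
    + eapply D1_cont; intro x; apply PT; lia.
  - rewrite SumE, PhiT, <- TeleP. apply sumN_le. intros j Hj; apply Cell; auto.
  - rewrite SumM, PsiT, <- TeleS.
    replace (sumN (fun j => Int (G 0%nat) (grid a b N j) (grid a b N (S j))) N -
      sumN (fun j => Psi (grid a b N (S j) - s) - Psi (grid a b N j - s)) N) with
      (sumN (fun j => Int (G 0%nat) (grid a b N j) (grid a b N (S j)) + (-1) *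
        (Psi (grid a b N (S j) - s) - Psi (grid a b N j - s))) N)
      by (rewrite sumN_plus, sumN_scal; ring).
    eapply Rle_trans. apply sumN_abs.
    eapply Rle_trans. apply sumN_le. intros j Hj.
    replace (Int (G 0%nat) (grid a b N j) (grid a b N (S j)) + -1 * (Psi (grid a b N (S j) - s) - Psi (grid a b N j - s)))
      with (Int (G 0%nat) (grid a b N j) (grid a b N (S j)) - (Psi (grid a b N (S j) - s) - Psi (grid a b N j - s))) by ring.
    apply Cell; auto.
    replace (fun j => h ^ S k * (h + (Phi (grid a b N (S j) - s) - Phi (grid a b N j - s))) / 2) with
      (fun j => (h ^ S k * h / 2) + (h ^ S k / 2) * (Phi (grid a b N (S j) - s) - Phi (grid a b N j - s)))
      by (apply functional_extensionality; intros; field).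
    rewrite sumN_plus, sumN_scal, sumN_const, TeleP, <- PhiT, LN. right; field.
Qed.

Lemma sumN_mono_n (w : nat -> R) m n : (forall j, 0 <= w j) -> (m <= n)%nat -> sumN w m <= sumN w n.
Proof. intros Hw H. induction H. lra. simpl. specialize (Hw m0). lra. Qed.

Lemma osc a b N (f : R -> R) (w : nat -> R) : a < b -> (1 <= N)%nat ->
  (forall c, (c < N)%nat -> forall x y, grid a b N c <= x <= grid a b N (S c) ->
      grid a b N c <= y <= grid a b N (S c) -> Rabs (f x - f y) <= w c) ->
  forall x y, a <= x <= b -> a <= y <= b -> Rabs (f x - f y) <= 2 * sumN (fun j => Rabs (w j)) N.
Proof.
  intros Hab HN H.
  assert (Hh := mesh_pos a b N Hab HN). assert (gS := grid_S a b N).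
  assert (Hg : forall n, (n <= N)%nat -> Rabs (f (grid a b N n) - f a) <= sumN (fun j => Rabs (w j)) n).
  { induction n; intros Hn. rewrite grid_0. simpl. rewrite Rminus_diag, Rabs_R0; lra.
    simpl. replace (f (grid a b N (S n)) - f a) with ((f (grid a b N (S n)) - f (grid a b N n)) + (f (grid a b N n) - f a)) by ring.
    eapply Rle_trans. apply Rabs_triang.
    assert (A1 : Rabs (f (grid a b N (S n)) - f (grid a b N n)) <= w n).
    { apply H. lia. rewrite gS; lra. rewrite gS; lra. }
    assert (A2 := IHn ltac:(lia)). assert (w n <= Rabs (w n)) by apply RRle_abs. lra. }
  assert (Hx : forall x, a <= x <= b -> Rabs (f x - f a) <= sumN (fun j => Rabs (w j)) N).
  { intros x Hx. destruct (locate_in a b N x Hab HN Hx) as [c [Hc Hxc]].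
    replace (f x - f a) with ((f x - f (grid a b N c)) + (f (grid a b N c) - f a)) by ring.
    eapply Rle_trans. apply Rabs_triang.
    assert (A1 : Rabs (f x - f (grid a b N c)) <= w c).
    { apply H; auto. rewrite gS; lra. }
    assert (A2 := Hg c ltac:(lia)).
    assert (A3 := sumN_mono_n (fun j => Rabs (w j)) (S c) N (fun j => Rabs_pos _) Hc).
    simpl in A3. assert (w c <= Rabs (w c)) by apply RRle_abs. lra. }
  intros x y H1 H2.
  assert (B1 := Hx x H1). assert (B2 := Hx y H2). revert B1 B2; unfold Rabs; repeat destruct Rcase_abs; lra.
Qed.

Lemma mean_bound a b (f : R -> R) W : a < b -> RI f a b ->
  (forall x y, a <= x <= b -> a <= y <= b -> Rabs (f x - f y) <= W) ->
  forall x, a <= x <= b -> Rabs (f x) <= Rabs (Int f a b) / (b - a) + W.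
Proof.
  intros Hab Rf HW x Hx.
  assert (L1 : Int (fun _ => f x - W) a b <= Int f a b).
  { apply Int_le; try lra; auto. apply Int_const. intros y Hy.
    assert (HH := HW x y Hx ltac:(lra)). revert HH; unfold Rabs; destruct Rcase_abs; lra. }
  assert (L2 : Int f a b <= Int (fun _ => f x + W) a b).
  { apply Int_le; try lra; auto. apply Int_const. intros y Hy.
    assert (HH := HW x y Hx ltac:(lra)). revert HH; unfold Rabs; destruct Rcase_abs; lra. }
  destruct (Int_const (f x - W) a b) as [_ E1]. destruct (Int_const (f x + W) a b) as [_ E2].
  rewrite E1 in L1. rewrite E2 in L2.
  set (I := Int f a b) in *.
  assert (Hd : f x - W <= I / (b - a) <= f x + W).
  { split; apply (Rmult_le_reg_r (b - a)); try lra; unfold Rdiv; rewrite Rmult_assoc, Rinv_l; lra. }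
  unfold Rdiv in *.
  assert (HH : Rabs (f x) <= Rabs (I * / (b - a)) + W).
  { revert Hd. unfold Rabs; repeat destruct Rcase_abs; lra. }
  rewrite Rabs_mult, (Rabs_right (/ (b - a))) in HH. exact HH. apply Rle_ge; left; apply Rinv_0_lt_compat; lra.
Qed.

Lemma sub_le g al y x be : al <= y -> y <= x -> x <= be -> continuity g -> (forall t, 0 <= g t) ->
  Int g y x <= Int g al be.
Proof.
  intros H1 H2 H3 Cg Pg.
  destruct (Int_chasles g al y x) as [R1 E1]; try (apply RI_contg; auto; lra).
  destruct (Int_chasles g al x be) as [R2 E2]; auto; try (apply RI_contg; auto; lra).
  rewrite E2, E1. assert (0 <= Int g al y) by (apply Int_nonneg; auto).
  assert (0 <= Int g x be) by (apply Int_nonneg; auto). lra.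
Qed.

Lemma abs_int_le q al be : al <= be -> continuity q ->
  Rabs (Int q al be) <= Int (fun t => / 2 + / 2 * q t ^ 2) al be.
Proof.
  intros H Cq.
  assert (Cb : continuity (fun t => / 2 + / 2 * q t ^ 2)).
  { apply cplus. apply cconst. apply (cmult (fun _ => /2)). apply cconst. apply csq; auto. }
  assert (Cn : continuity (fun t => - (/ 2 + / 2 * q t ^ 2))).
  { replace (fun t => - (/ 2 + / 2 * q t ^ 2)) with (fun t => (fun _ => 0) t - (fun t => / 2 + / 2 * q t ^ 2) t)
      by (apply functional_extensionality; intros; ring). apply cminus; auto. apply cconst. }
  assert (L1 : Int (fun t => - (/ 2 + / 2 * q t ^ 2)) al be <= Int q al be).
  { apply Int_le; auto; try (apply RI_contg; auto). intros x _.
    assert (0 <= (Rabs (q x) - 1) ^ 2) by apply pow2_ge_0. rewrite <- (pow2_abs (q x)).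
    revert H0; unfold Rabs; destruct Rcase_abs; nra. }
  assert (L2 : Int q al be <= Int (fun t => / 2 + / 2 * q t ^ 2) al be).
  { apply Int_le; auto; try (apply RI_contg; auto). intros x _.
    assert (0 <= (Rabs (q x) - 1) ^ 2) by apply pow2_ge_0. rewrite <- (pow2_abs (q x)).
    revert H0; unfold Rabs; destruct Rcase_abs; nra. }
  destruct (Int_lin (fun _ => 0) (fun t => / 2 + / 2 * q t ^ 2) al be (-1)) as [_ E1].
  apply Int_const. apply RI_contg; auto.
  rewrite Int_zero in E1.
  replace (fun x => 0 + -1 * (/ 2 + / 2 * q x ^ 2)) with (fun t => - (/ 2 + / 2 * q t ^ 2)) in E1
    by (apply functional_extensionality; intros; ring).
  rewrite E1 in L1. apply Rabs_le; lra.
Qed.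

Lemma good_RIl k a b N F l : a < b -> (1 <= N)%nat -> good k a b N F -> (l <= k)%nat ->
  RI (F l) a b /\ forall j, (j < N)%nat -> RI (F l) (grid a b N j) (grid a b N (S j)).
Proof.
  intros Hab HN [_ HG] Hl.
  assert (H : forall j, (j < N)%nat -> RI (F l) (grid a b N j) (grid a b N (S j))).
  { intros j Hj. destruct (HG j Hj) as [Q (T & C & E1 & E2)].
    apply (RI_cell a b N _ (Q l)); auto. eapply D1_cont; apply T; auto.
    intros x Hx; rewrite E1; auto; lra. }
  split; auto. apply (RI_ab a b N); auto.
Qed.

Lemma good_int0 k a b N F m : a < b -> (1 <= N)%nat -> good k a b N F -> (S m <= k)%nat ->
  Int (F (S m)) a b = 0.
Proof.
  intros Hab HN Hg Hl. destruct (good_RIl k a b N F (S m) Hab HN Hg Hl) as [_ Rc].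
  destruct (RI_ab a b N (F (S m)) Hab HN Rc) as [_ ->].
  destruct Hg as [Fper HG].
  rewrite (sumN_ext _ (fun j => F m (grid a b N (S j)) - F m (grid a b N j))).
  - rewrite (sumN_tele (fun j => F m (grid a b N j))). rewrite grid_N, grid_0; auto.
    replace b with (a + (b - a)) at 1 by ring. rewrite Fper; [ring|lia].
  - intros j Hj. destruct (HG j Hj) as [Q (T & C & E1 & E2)].
    assert (Hs := grid_S a b N j). assert (Hh := mesh_pos a b N Hab HN).
    assert (CQ : continuity (Q (S m))) by (eapply D1_cont; apply T; auto).
    rewrite (Int_ext_open (F (S m)) (Q (S m))); auto; try lra.
    destruct (FTC (Q m) (Q (S m)) (grid a b N j) (grid a b N (S j))) as [_ ->]; try lra.
    intros x _; apply T; lia. intros x _; apply CQ.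
    rewrite !E1; auto; try lia; lra.
    apply RI_contg; auto; lra. intros x Hx; rewrite E1; auto; lra.
Qed.

Lemma good_osc_top k a b N F : a < b -> (1 <= N)%nat -> good k a b N F ->
  forall x y, a <= x <= b -> a <= y <= b ->
  Rabs (F k x - F k y) <= (b - a) + Int (fun x => F (S k) x ^ 2) a b.
Proof.
  intros Hab HN Hg x y Hx Hy.
  destruct (good_RI k a b N F Hab HN Hg) as [RE RC].
  assert (Hh := mesh_pos a b N Hab HN).
  set (w := fun j => / 2 * mesh a b N + / 2 * Int (fun x => F (S k) x ^ 2) (grid a b N j) (grid a b N (S j))).
  assert (Wpos : forall j, (j < N)%nat -> 0 <= w j).
  { intros j Hj. unfold w. assert (Hs := grid_S a b N j).
    assert (0 <= Int (fun x => F (S k) x ^ 2) (grid a b N j) (grid a b N (S j))).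
    { rewrite <- (Int_zero (grid a b N j) (grid a b N (S j))). apply Int_le; auto. lra. apply Int_const.
      intros; apply pow2_ge_0. }
    lra. }
  assert (Cell : forall c, (c < N)%nat -> forall x y, grid a b N c <= x <= grid a b N (S c) ->
      grid a b N c <= y <= grid a b N (S c) -> Rabs (F k x - F k y) <= w c).
  { intros c Hc.
    destruct Hg as [_ HG]. destruct (HG c Hc) as [Q (T & C & E1 & E2)].
    assert (Hs := grid_S a b N c).
    assert (W : forall x y, grid a b N c <= y -> y <= x -> x <= grid a b N (S c) -> Rabs (F k x - F k y) <= w c).
    { intros x0 y0 H1 H2 H3. rewrite !E1; auto; try lra.
      destruct (FTC (Q k) (Q (S k)) y0 x0 H2) as [_ HF]. intros; apply T; auto. intros; apply C.
      rewrite <- HF. eapply Rle_trans. apply abs_int_le; auto.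
      assert (Cb : continuity (fun t => / 2 + / 2 * Q (S k) t ^ 2)).
      { apply cplus. apply cconst. apply (cmult (fun _ => /2)). apply cconst. apply csq; auto. }
      eapply Rle_trans. apply (sub_le _ (grid a b N c) y0 x0 (grid a b N (S c))); auto.
      intros t. assert (0 <= Q (S k) t ^ 2) by apply pow2_ge_0. lra.
      destruct (Int_lin (fun _ => / 2) (fun t => Q (S k) t ^ 2) (grid a b N c) (grid a b N (S c)) (/ 2)) as [_ HL].
      apply Int_const. apply RI_contg. lra. apply csq; auto.
      rewrite HL. destruct (Int_const (/2) (grid a b N c) (grid a b N (S c))) as [_ ->].
      unfold w. rewrite (Int_ext_open (fun x => F (S k) x ^ 2) (fun x => Q (S k) x ^ 2)); try lra; auto.
      apply RI_contg. lra. apply csq; auto. intros; rewrite E2; auto. }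
    intros x0 y0 H1 H2. destruct (Rle_dec y0 x0).
    - apply W; lra.
    - rewrite Rabs_minus_sym. apply W; lra. }
  eapply Rle_trans. apply (osc a b N (F k) w Hab HN Cell); auto.
  rewrite (sumN_ext _ w). 2: { intros j Hj; apply Rabs_right; apply Rle_ge; auto. }
  unfold w. rewrite sumN_plus, sumN_scal, sumN_scal, sumN_const.
  destruct (RI_ab a b N _ Hab HN RC) as [_ <-]. rewrite (LNh a b N HN). right; field.
Qed.

Lemma good_osc_low k a b N F l B : a < b -> (1 <= N)%nat -> good k a b N F -> (l < k)%nat -> 0 <= B ->
  (forall x, a <= x <= b -> Rabs (F (S l) x) <= B) ->
  forall x y, a <= x <= b -> a <= y <= b -> Rabs (F l x - F l y) <= 2 * ((b - a) * B).
Proof.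
  intros Hab HN Hg Hl HB HFB x y Hx Hy.
  assert (Hh := mesh_pos a b N Hab HN).
  assert (Cell : forall c, (c < N)%nat -> forall x y, grid a b N c <= x <= grid a b N (S c) ->
      grid a b N c <= y <= grid a b N (S c) -> Rabs (F l x - F l y) <= mesh a b N * B).
  { intros c Hc x0 y0 H1 H2.
    destruct Hg as [_ HG]. destruct (HG c Hc) as [Q (T & C & E1 & E2)].
    assert (Hs := grid_S a b N c).
    assert (G1 : a <= grid a b N c).
    { pose proof (grid_mono a b N 0 c Hab HN ltac:(lia)) as HH; rewrite grid_0 in HH; lra. }
    assert (G2 : grid a b N (S c) <= b).
    { pose proof (grid_mono a b N (S c) N Hab HN ltac:(lia)) as HH; rewrite (grid_N a b N HN) in HH; lra. }
    rewrite !E1; try lia; auto.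
    destruct (MVT_abs (Q l) (Q (S l)) y0 x0) as [z [Hz Hz2]].
    { intros z _. apply T; lia. }
    assert (Z1 : Rmin y0 x0 >= grid a b N c) by (unfold Rmin; destruct Rle_dec; lra).
    assert (Z2 : Rmax y0 x0 <= grid a b N (S c)) by (unfold Rmax; destruct Rle_dec; lra).
    assert (Z3 : Rabs (x0 - y0) <= mesh a b N) by (unfold Rabs; destruct Rcase_abs; lra).
    rewrite Hz. rewrite <- (E1 (S l) z) by (first [lia | lra]).
    assert (Rabs (F (S l) z) <= B) by (apply HFB; lra).
    rewrite Rmult_comm. apply Rmult_le_compat; auto; apply Rabs_pos. }
  eapply Rle_trans. apply (osc a b N (F l) (fun _ => mesh a b N * B) Hab HN Cell); auto.
  rewrite sumN_const, Rabs_right, (LNh a b N HN). right; ring.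
  apply Rle_ge, Rmult_le_pos; lra.
Qed.

Fixpoint Bs (L mu E0 : R) (i : nat) : R :=
  match i with
  | O => mu / L + (L + E0)
  | S i => mu / L + (2 * L + 1) * Bs L mu E0 i
  end.

Lemma Bs_pos L mu E0 i : 0 < L -> 0 <= mu -> 0 <= E0 -> 0 <= Bs L mu E0 i.
Proof.
  intros HL Hm HE. assert (0 <= mu / L) by (unfold Rdiv; apply Rmult_le_pos; [lra | left; apply Rinv_0_lt_compat; lra]).
  induction i; simpl; nra.
Qed.

Lemma Bs_mono L mu E0 i j : 0 < L -> 0 <= mu -> 0 <= E0 -> (i <= j)%nat -> Bs L mu E0 i <= Bs L mu E0 j.
Proof.
  intros HL Hm HE H. assert (0 <= mu / L) by (unfold Rdiv; apply Rmult_le_pos; [lra | left; apply Rinv_0_lt_compat; lra]).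
  induction H. lra. simpl. assert (Hp := Bs_pos L mu E0 m HL Hm HE). nra.
Qed.

Lemma bounds_good k a b N F E0 mu : a < b -> (1 <= N)%nat -> good k a b N F ->
  Int (fun x => F (S k) x ^ 2) a b <= E0 -> Rabs (Int (F 0%nat) a b) <= mu -> 0 <= mu -> 0 <= E0 ->
  forall l x, (l <= k)%nat -> a <= x <= b -> Rabs (F l x) <= Bs (b - a) mu E0 k.
Proof.
  intros Hab HN Hg HE Hmu Hm0 HE0.
  assert (HL : 0 < b - a) by lra.
  assert (Imean : forall l, (l <= k)%nat -> Rabs (Int (F l) a b) <= mu).
  { intros l Hl. destruct l. auto. rewrite (good_int0 k a b N F l); auto. rewrite Rabs_R0; auto. }
  assert (Lev : forall i, (i <= k)%nat -> forall x, a <= x <= b -> Rabs (F (k - i)%nat x) <= Bs (b - a) mu E0 i).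
  { induction i; intros Hi x Hx.
    - replace (k - 0)%nat with k by lia.
      eapply Rle_trans. apply (mean_bound a b (F k) ((b - a) + E0)); auto.
      apply (proj1 (good_RIl k a b N F k Hab HN Hg (le_n _))).
      intros x0 y0 H1 H2. eapply Rle_trans. apply (good_osc_top k a b N F); auto. lra.
      simpl. assert (Rabs (Int (F k) a b) / (b - a) <= mu / (b - a)).
      { apply Rmult_le_compat_r. left; apply Rinv_0_lt_compat; lra. apply Imean; auto. }
      lra.
    - set (l := (k - S i)%nat).
      assert (Hl : (S l = k - i)%nat) by (unfold l; lia).
      assert (IH := IHi ltac:(lia)). rewrite <- Hl in IH.
      assert (HB := Bs_pos (b - a) mu E0 i HL Hm0 HE0).
      eapply Rle_trans. apply (mean_bound a b (F l) (2 * ((b - a) * Bs (b - a) mu E0 i))); auto.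
      apply (proj1 (good_RIl k a b N F l Hab HN Hg ltac:(lia))).
      intros x0 y0 H1 H2. apply (good_osc_low k a b N F l); auto; lia.
      simpl. assert (Rabs (Int (F l) a b) / (b - a) <= mu / (b - a)).
      { apply Rmult_le_compat_r. left; apply Rinv_0_lt_compat; lra. apply Imean; lia. }
      nra. }
  intros l x Hl Hx. replace l with (k - (k - l))%nat by lia.
  eapply Rle_trans. apply Lev; auto; lia. apply Bs_mono; auto; lia.
Qed.

Theorem mainTheorem9
  (k : nat) (a b v T c : R) (phiIC : R -> R) (dIC : nat -> R -> R)
  (Hab : a < b) (HT : 0 < T) (Hc : 0 < c)
  (HIC0 : forall x, dIC 0%nat x = phiIC x)
  (HICd : deriv_tower k dIC)
  (HICc : continuity (dIC (S k)))
  (HICper : forall x, phiIC (x + (b - a)) = phiIC x) :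
  exists M : R,
    forall (N : nat) (dt : R) (Phi : nat -> nat -> R -> R),
      (1 <= N)%nat ->
      dt >= c * (mesh a b N) ^ (S k) ->
      (forall l x, (l <= S k)%nat -> Phi 0%nat l x = dIC l x) ->
      (forall m, jet_step k a b v dt N (Phi m) (Phi (S m))) ->
      forall m : nat, INR m * dt <= T ->
        (forall l x, (l <= k)%nat -> a <= x <= b -> Rabs (Phi m l x) <= M) /\
        (exists pr : Riemann_integrable (fun x => (Phi m (S k) x) ^ 2) a b,
            sqrt (RiemannInt pr) <= M).
Proof.
  set (L := b - a). assert (HL : 0 < L) by (unfold L; lra).
  set (E0 := Int (fun x => dIC (S k) x ^ 2) a b).
  assert (HE0 : 0 <= E0) by (apply Int_nonneg; try lra; [apply csq; auto | intros; apply pow2_ge_0]).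
  set (mu0 := Int (dIC 0%nat) a b).
  set (mu := Rabs mu0 + T / c * ((L + E0) / 2)).
  assert (Hmu : 0 <= mu).
  { unfold mu. assert (0 <= T / c) by (unfold Rdiv; apply Rmult_le_pos; [lra | left; apply Rinv_0_lt_compat; lra]).
    assert (0 <= Rabs mu0) by apply Rabs_pos. nra. }
  assert (Dper : forall l x, (l <= S k)%nat -> dIC l (x + L) = dIC l x).
  { induction l; intros x Hl. rewrite !HIC0; apply HICper.
    assert (IH : forall x, dIC l (x + L) = dIC l x) by (intros; apply IHl; lia).
    apply (uniqueness_limite (dIC l) x).
    - apply (Dext (fun y => dIC l (y - - L))). intros y; replace (y - - L) with (y + L) by ring; apply IH.
      apply Dshift. replace (x - - L) with (x + L) by ring. apply HICd; lia.
    - apply HICd; lia. }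
  exists (Bs L mu E0 k + sqrt E0).
  intros N dt Phi HN Hdt H0 Hstep m Hm.
  set (h := mesh a b N). assert (Hh : 0 < h) by (apply mesh_pos; auto).
  assert (hD : 0 <= h ^ S k) by (apply pow_le; lra).
  assert (G0 : good k a b N (Phi 0%nat)).
  { split. intros l x Hl. fold L. rewrite (H0 l (x + L) Hl), (H0 l x Hl). apply Dper; auto.
    intros j Hj. exists dIC. repeat split.
    - intros l Hl x. apply HICd; auto.
    - auto.
    - intros l x Hl _. apply H0; lia.
    - intros x _. apply H0; lia. }
  assert (E0eq : Int (fun x => Phi 0%nat (S k) x ^ 2) a b = E0).
  { unfold E0. f_equal. apply functional_extensionality; intros; rewrite H0; auto. }
  assert (mu0eq : Int (Phi 0%nat 0%nat) a b = mu0).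
  { unfold mu0. f_equal. apply functional_extensionality; intros; rewrite H0; auto; lia. }
  assert (Ind : forall m, good k a b N (Phi m) /\ Int (fun x => Phi m (S k) x ^ 2) a b <= E0 /\
            Rabs (Int (Phi m 0%nat) a b - mu0) <= INR m * h ^ S k * ((L + E0) / 2)).
  { induction m0.
    - split; auto. split. lra. rewrite mu0eq, Rminus_diag, Rabs_R0. simpl; lra.
    - destruct IHm0 as (Gm & Em & Mm).
      destruct (step k a b N v dt (Phi m0) (Phi (S m0)) Hab HN Gm (Hstep m0)) as (Gs & Es & Ms).
      split; auto. split. lra.
      replace (Int (Phi (S m0) 0%nat) a b - mu0) with
        ((Int (Phi (S m0) 0%nat) a b - Int (Phi m0 0%nat) a b) + (Int (Phi m0 0%nat) a b - mu0)) by ring.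
      eapply Rle_trans. apply Rabs_triang. rewrite S_INR. fold h L in Ms.
      assert (h ^ S k * (L + Int (fun x => Phi m0 (S k) x ^ 2) a b) / 2 <= h ^ S k * ((L + E0) / 2)).
      { apply Rle_trans with (h ^ S k * ((L + E0) / 2)). 2: lra.
        unfold Rdiv. rewrite Rmult_assoc. apply Rmult_le_compat_l; auto. lra. }
      nra. }
  destruct (Ind m) as (Gm & Em & Mm).
  assert (Hmh : INR m * h ^ S k <= T / c).
  { apply (Rmult_le_reg_r c); auto. replace (T / c * c) with T by (field; lra).
    assert (0 <= INR m) by apply pos_INR. fold h in Hdt. nra. }
  assert (Mu : Rabs (Int (Phi m 0%nat) a b) <= mu).
  { unfold mu. replace (Int (Phi m 0%nat) a b) with ((Int (Phi m 0%nat) a b - mu0) + mu0) by ring.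
    eapply Rle_trans. apply Rabs_triang.
    assert (INR m * h ^ S k * ((L + E0) / 2) <= T / c * ((L + E0) / 2)).
    { apply Rmult_le_compat_r; auto. lra. }
    lra. }
  assert (Hsq : 0 <= sqrt E0) by apply sqrt_pos.
  assert (HB := Bs_pos L mu E0 k HL Hmu HE0).
  split.
  - intros l x Hl Hx. eapply Rle_trans. apply (bounds_good k a b N (Phi m) E0 mu); auto. fold L. lra.
  - destruct (good_RI k a b N (Phi m) Hab HN Gm) as [[pr _] _]. exists pr.
    rewrite <- (Int_eq _ _ _ pr). apply Rle_trans with (sqrt E0). apply sqrt_le_1_alt; auto. lra.
Qed.
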